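(* For every type $\lambda$ of degree $d$, $$H_\lambda=\sum_{\tau}a(\tau,\lambda)\,M_\tau,\qquad E^+_\lambda=\sum_\tau e(\tau,\lambda)\,M_\tau,$$ the sums over all types $\tau$ of degree $d$, where $a(\tau,\lambda)$ is the number of arrangements of $\tau$ into $\lambda$ and $e(\tau,\lambda)$ the number of such arrangements with all entries in $\{0,1\}$. Moreover $a(\tau,\lambda)=a(\lambda^t,\tau^t)$ and $e(\tau,\lambda)=e(\lambda^t,\tau^t)$, the equalities being realized by the bijection $A\mapsto A^T$ on arrangements.
   Context: Let $x_{ij}$ ($i,j\ge1$) be indeterminates with $x_{ij}$ of degree $i$. The ring $\mathrm{PS}_{\mathbb Z}$ of polysymmetric functions is the ring of formal sums of monomials in the $x_{ij}$ of bounded degree with integer coefficients that are invariant under all permutations of the index set $\mathbb N_{>0}^2$ preserving the first coordinate. A type of degree $d$ is a finite multiset of pairs $(b,m)$ of positive integers with $\sum bm=d$; its transpose $\tau^t$ replaces each $(b,m)$ by $(m,b)$. A monomial $x_{i_1j_1}^{m_1}\cdots x_{i_rj_r}^{m_r}$ with distinct variables and $m_k\ge1$ has type $\{(i_1,m_1),\dots,(i_r,m_r)\}$; $M_\tau$ is the sum of all monomials of type $\tau$. $H_d$ is the sum of all monomials of degree $d$ and $E^+_d$ the sum of all squarefree monomials of degree $d$; for a type $\lambda$, $H_\lambda=\prod_{(d,m)\in\lambda}H_d(x_{**}^m)$ and $E^+_\lambda=\prod_{(d,m)\in\lambda}E^+_d(x_{**}^m)$, where $f(x_{**}^m)$ means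 substituting $x_{ij}\mapsto x_{ij}^m$. For types $\tau=\{(b_1,m_1),\dots,(b_r,m_r)\}$ and $\lambda=\{(c_1,n_1),\dots,(c_s,n_s)\}$ (in fixed orderings), an arrangement of $\tau$ into $\lambda$ is an $r\times s$ non-negative integer matrix $A$ with $A\vec n=\vec m$ and $A^T\vec b=\vec c$. *)

(* Defs.v *)
From HB Require Import structures.
From mathcomp Require Import all_boot all_order all_algebra.
From mathcomp Require Import finmap multiset.
Set Implicit Arguments. Unset Strict Implicit. Unset Printing Implicit Defensive.
Import Order.TTheory GRing.Theory Num.Theory.

Local Open Scope fset_scope.
Local Open Scope mset_scope.

(* The pair (i,j) : nat * nat stands for the variable x_{ij}; only pairs   *)
(* with i,j >= 1 are genuine variables (see [valid]).  A monomial is a     *)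
(* finite multiset of variables: the multiplicity of (i,j) is the exponent *)
(* of x_{ij}.                                                              *)
Definition var := (nat * nat)%type.
Definition mon := {mset var}.

Definition valid (mu : mon) : bool :=
  all (fun x : var => (0 < x.1)%N && (0 < x.2)%N) (finsupp mu).

Definition mdeg (mu : mon) : nat := (\sum_(x <- enum_mset mu) x.1)%N.

Definition mtype (mu : mon) : {mset (nat * nat)} :=
  seq_mset [seq (x.1, mu x) | x <- finsupp mu].

(* Formal sums of monomials with integer coefficients: coefficient maps.   *)
Definition ser := mon -> int.

Definition submsets (mu : mon) : seq mon :=
  undup [seq seq_mset (mask (val t) (enum_mset mu))
        | t <- enum {: (size (enum_mset mu)).-tuple bool}].

Definition sermul (f g : ser) : ser :=
  fun mu => (\sum_(al <- submsets mu) f al * g (mu `\` al))%R.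

Definition ser1 : ser := fun mu => ((mu == mset0 : nat)%:Z)%R.

(* f(x_{**}^m): substitute x_{ij} |-> x_{ij}^m (m >= 1).  The coefficient *)
(* of mu is f(alpha) if mu = m*alpha, and 0 if some exponent of mu is not  *)
(* divisible by m.                                                         *)
Definition mdivn (m : nat) (mu : mon) : mon :=
  ([fsfun x in finsupp mu => (mu x %/ m)%N] : {mset var}).
Definition subst_pow (m : nat) (f : ser) : ser :=
  fun mu => if all (fun x => (m %| mu x)%N) (finsupp mu)
            then f (mdivn m mu) else 0%R.

Definition Hser (d : nat) : ser :=
  fun mu => ((valid mu && (mdeg mu == d) : nat)%:Z)%R.

Definition Eser (d : nat) : ser :=
  fun mu => ((valid mu && all (fun x => (mu x <= 1)%N) (finsupp mu)
                       && (mdeg mu == d) : nat)%:Z)%R.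

Definition typ := {mset (nat * nat)}.

Definition is_type (t : typ) : bool :=
  all (fun p : nat * nat => (0 < p.1)%N && (0 < p.2)%N) (enum_mset t).

Definition tdeg (t : typ) : nat := (\sum_(p <- enum_mset t) p.1 * p.2)%N.

Definition ttr (t : typ) : typ := seq_mset [seq (p.2, p.1) | p <- enum_mset t].

Definition Mser (t : typ) : ser :=
  fun mu => ((valid mu && (mtype mu == t) : nat)%:Z)%R.

Definition Hlam (l : typ) : ser :=
  \big[sermul/ser1]_(p <- enum_mset l) subst_pow p.2 (Hser p.1).
Definition Elam (l : typ) : ser :=
  \big[sermul/ser1]_(p <- enum_mset l) subst_pow p.2 (Eser p.1).

(* The finite list of all types of degree d.  Every type of degree d has   *)
(* all its pairs in [1,d]^2 and all multiplicities <= d, so it is the image *)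
(* of some f : 'I_d * 'I_d -> 'I_d.+1 under [typ_of_ff].                   *)
Definition typ_of_ff (d : nat) (f : {ffun 'I_d * 'I_d -> 'I_d.+1}) : typ :=
  seq_mset (flatten [seq nseq (f p) ((p.1 : nat).+1, (p.2 : nat).+1)
                    | p <- enum {: 'I_d * 'I_d}]).
Definition types_of_deg (d : nat) : seq typ :=
  undup [seq typ_of_ff f | f <- enum {: {ffun 'I_d * 'I_d -> 'I_d.+1}}
                         & tdeg (typ_of_ff f) == d].

Definition sum_types (d : nat) (c : typ -> nat) : ser :=
  fun mu => (\sum_(t <- types_of_deg d) (c t)%:Z * Mser t mu)%R.

(* Arrangements.  With tau = {(b_1,m_1),..,(b_r,m_r)} and                   *)
(* lambda = {(c_1,n_1),..,(c_s,n_s)} in fixed orderings (given by          *)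
(* b m : 'I_r -> nat and c n : 'I_s -> nat), an arrangement of tau into    *)
(* lambda is an r x s nat matrix A with A n = m and A^T b = c.              *)
Definition is_arr (r s : nat) (b m : 'I_r -> nat) (c n : 'I_s -> nat)
    (A : 'M[nat]_(r, s)) : bool :=
  [forall i, (\sum_(j < s) A i j * n j)%N == m i] &&
  [forall j, (\sum_(i < r) A i j * b i)%N == c j].

Definition is01 (r s : nat) (A : 'M[nat]_(r, s)) : bool :=
  [forall i, forall j, (A i j <= 1)%N].

Definition ordering_of (r : nat) (b m : 'I_r -> nat) (t : typ) : bool :=
  seq_mset [seq (b i, m i) | i <- enum 'I_r] == t.

Definition fst_at (t : typ) (i : 'I_(size (enum_mset t))) : nat :=
  (nth (0, 0)%N (enum_mset t) i).1.
Definition snd_at (t : typ) (i : 'I_(size (enum_mset t))) : nat :=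
  (nth (0, 0)%N (enum_mset t) i).2.

Arguments fst_at : clear implicits.
Arguments snd_at : clear implicits.

(* Entries of an arrangement satisfy A_ij <= A_ij n_j <= m_i <= sum_i m_i *)
(* (as n_j >= 1), so arrangements are counted among matrices with entries *)
(* in [0, sum_i m_i].                                                      *)
Definition arr_bound (t : typ) : nat := (\sum_(p <- enum_mset t) p.2)%N.

Definition num_arr (t l : typ) : nat :=
  #|[set A : 'M['I_(arr_bound t).+1]_(size (enum_mset t), size (enum_mset l))
     | is_arr (fst_at t) (snd_at t) (fst_at l) (snd_at l) (map_mx val A)]|.

Definition num_arr01 (t l : typ) : nat :=
  #|[set A : 'M['I_(arr_bound t).+1]_(size (enum_mset t), size (enum_mset l))
     | is_arr (fst_at t) (snd_at t) (fst_at l) (snd_at l) (map_mx val A)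
       && is01 (map_mx val A)]|.

(* Main.v *)
Require Import Defs.
From HB Require Import structures.
From mathcomp Require Import all_boot all_order all_algebra.
From mathcomp Require Import finmap multiset.
From mathcomp Require Import all_fingroup zify.
From Stdlib Require Import FunctionalExtensionality.
Import Order.TTheory GRing.Theory Num.Theory.

Module Aux.
Set Implicit Arguments. Unset Strict Implicit. Unset Printing Implicit Defensive.

Definition cntq (q : pred nat) (K r s : nat) (b m : 'I_r -> nat) (c n : 'I_s -> nat) : nat :=
  #|[set A : 'M['I_K]_(r, s) | is_arr b m c n (map_mx val A) &&
                               [forall i, forall j, q (val (A i j))]]|.

Arguments cntq : clear implicits.

Lemma card_sumE (T : finType) (P : pred T) : #|[set x | P x]| = (\sum_(x | P x) 1)%N.
Proof. by rewrite -sum1_card; apply: eq_bigl => x; rewrite inE. Qed.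

Lemma is_arr_tr r s b m c n (A : 'M[nat]_(r,s)) : is_arr b m c n A = is_arr n c m b A^T.
Proof.
rewrite /is_arr andbC; congr andb; apply: eq_forallb => i; congr (_ == _);
  by apply: eq_bigr => j _; rewrite mxE.
Qed.

Lemma forall_swap (I J : finType) (P : I -> J -> bool) :
  [forall i, forall j, P i j] = [forall j, forall i, P i j].
Proof.
apply/forallP/forallP => H x; apply/forallP => y; by move/forallP: (H y) => /(_ x).
Qed.

Lemma cntq_tr q K r s b m c n : cntq q K r s b m c n = cntq q K s r n c m b.
Proof.
rewrite /cntq !card_sumE (reindex (@trmx _ s r)); last first.
  by exists (@trmx _ r s) => A _; rewrite trmxK.
apply: eq_bigl => A; rewrite is_arr_tr map_trmx trmxK forall_swap.
by congr andb; apply: eq_forallb => i; apply: eq_forallb => j; rewrite mxE.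
Qed.

Lemma forall_perm (I : finType) (p : {perm I}) (P : I -> bool) :
  [forall i, P (p i)] = [forall i, P i].
Proof.
apply/forallP/forallP => H x; last exact: H.
by have := H (p^-1 x)%g; rewrite permKV.
Qed.

Lemma cntq_rowperm q K r s (p : 'S_r) b m b' m' c n :
  (forall i, b i = b' (p i)) -> (forall i, m i = m' (p i)) ->
  cntq q K r s b m c n = cntq q K r s b' m' c n.
Proof.
move=> Hb Hm; rewrite /cntq !card_sumE.
rewrite [RHS](reindex_inj (h := row_perm (p^-1)%g)); last first.
  move=> A B E; apply/matrixP => i j.
  by have := congr1 (fun M : 'M['I_K]_(r,s) => M (p i) j) E; rewrite !mxE permK.
apply: eq_bigl => A /=; rewrite /is_arr.
rewrite -(forall_perm p (fun i => _ == m' i)).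
rewrite -(forall_perm p (fun i => [forall j, q (val (row_perm _ A i j))])).
congr andb; first congr andb.
- apply: eq_forallb => i; rewrite Hm; congr (_ == _); apply: eq_bigr => j _.
  by rewrite !mxE permK.
- apply: eq_forallb => j; congr (_ == _).
  rewrite [RHS](reindex_inj (h := p) (@perm_inj _ p)) /=.
  by apply: eq_bigr => i _; rewrite !mxE permK Hb.
- apply: eq_forallb => i; apply: eq_forallb => j; by rewrite !mxE permK.
Qed.

Lemma cntq_bound q K K' r s b m c n : K <= K' ->
  (forall A : 'M[nat]_(r,s), is_arr b m c n A -> forall i j, A i j <= K) ->
  cntq q K.+1 r s b m c n = cntq q K'.+1 r s b m c n.
Proof.
move=> hK hA; rewrite /cntq !card_sumE.
have hK1 : K.+1 <= K'.+1 by [].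
rewrite [RHS](reindex (map_mx (widen_ord hK1))); last first.
  exists (map_mx (fun x : 'I_K'.+1 => (inord x : 'I_K.+1))).
    move=> A _; apply/matrixP => i j; rewrite !mxE; apply/val_inj => /=.
    by rewrite inordK //= ltnS -ltnS.
  move=> A; rewrite inE => /andP[hA' _]; apply/matrixP => i j; rewrite !mxE.
  apply/val_inj => /=; rewrite inordK //.
  by have := hA _ hA' i j; rewrite mxE ltnS.
apply: eq_bigl => A; have -> : map_mx val (map_mx (widen_ord hK1) A) = map_mx val A.
  by apply/matrixP => i j; rewrite !mxE.
by congr andb; apply: eq_forallb => i; apply: eq_forallb => j; rewrite mxE.
Qed.

Lemma arr_deg r s b m c n (A : 'M[nat]_(r,s)) : is_arr b m c n A ->
  (\sum_i b i * m i = \sum_j c j * n j)%N.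
Proof.
case/andP => /forallP Hr /forallP Hc.
transitivity (\sum_i \sum_j b i * (A i j * n j))%N.
  by apply: eq_bigr => i _; rewrite -(eqP (Hr i)) big_distrr.
rewrite exchange_big /=; apply: eq_bigr => j _; rewrite -(eqP (Hc j)) big_distrl /=.
by apply: eq_bigr => i _; rewrite mulnCA mulnA.
Qed.

Lemma arr_entry r s b m c n (A : 'M[nat]_(r,s)) : is_arr b m c n A ->
  (forall j, 0 < n j) -> forall i j, A i j <= m i.
Proof.
case/andP => /forallP Hr _ Hn i j; rewrite -(eqP (Hr i)) (bigD1 j) //=.
by apply: leq_trans (leq_addr _ _); rewrite leq_pmulr.
Qed.


Definition colc (L : seq (nat * nat)) (j : 'I_(size L)) : nat := (nth (0,0)%N L j).1.
Definition coln (L : seq (nat * nat)) (j : 'I_(size L)) : nat := (nth (0,0)%N L j).2.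

Arguments colc : clear implicits.
Arguments coln : clear implicits.

Lemma forall_recl n (P : 'I_n.+1 -> bool) :
  [forall j, P j] = P ord0 && [forall j, P (lift ord0 j)].
Proof.
apply/forallP/andP => [H|[H0 /forallP H] j]; first by split => //; apply/forallP.
by case: (unliftP ord0 j) => [k ->|->].
Qed.

Lemma forall_and (I : finType) (P Q : pred I) :
  [forall i, P i && Q i] = [forall i, P i] && [forall i, Q i].
Proof.
apply/forallP/andP => [H|[/forallP H1 /forallP H2] i]; last by rewrite H1 H2.
by split; apply/forallP => i; case/andP: (H i).
Qed.

Lemma addeq (x y z : nat) : (x + y == z) = (x <= z) && (y == z - x).
Proof.
apply/eqP/andP => [<-|[h /eqP ->]]; last by rewrite subnKC.
by split; [apply: leq_addr | rewrite addKn].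
Qed.

Lemma mapE (T U : Type) (f : T -> U) r s (A : 'M_(r,s)) i j : map_mx f A i j = f (A i j).
Proof. by rewrite mxE. Qed.

Section RowMx.
Variables (T : Type) (r k : nat) (a : 'M[T]_(r, 1)) (B : 'M[T]_(r, k)).
Lemma row_mx0 i : row_mx a B i ord0 = a i ord0.
Proof. by rewrite (_ : ord0 = lshift k (ord0 : 'I_1)) ?row_mxEl //; apply: val_inj. Qed.
Lemma row_mxS i j : row_mx a B i (lift ord0 j) = B i j.
Proof. by rewrite (_ : lift ord0 j = rshift 1 j) ?row_mxEr //; apply: val_inj. Qed.
End RowMx.

Lemma cond_row_mx q K r (b v : 'I_r -> nat) p L (a : 'cV['I_K]_r) (B : 'M['I_K]_(r, size L)) :
  (is_arr b v (colc (p::L)) (coln (p::L)) (map_mx val (row_mx a B)) &&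
     [forall i, forall j, q (val (row_mx a B i j))]) =
  ([forall i, val (a i ord0) * p.2 <= v i] && (\sum_i val (a i ord0) * b i == p.1)
     && [forall i, q (val (a i ord0))]) &&
  (is_arr b (fun i => v i - val (a i ord0) * p.2) (colc L) (coln L) (map_mx val B) &&
     [forall i, forall j, q (val (B i j))]).
Proof.
rewrite /is_arr.
have E1 : [forall i, \sum_(j < size (p :: L)) map_mx val (row_mx a B) i j
               * coln (p :: L) j == v i] =
   [forall i, val (a i ord0) * p.2 <= v i] &&
   [forall i, \sum_(j < size L) map_mx val B i j * coln L j == v i - val (a i ord0) * p.2].
  rewrite -forall_and; apply: eq_forallb => i.
  rewrite big_ord_recl !mapE row_mx0 addeq; congr (_ && (_ == _)).
  apply: eq_bigr => j _; rewrite !mapE row_mxS; by congr (_ * _).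
have E2 : [forall j, \sum_(i < r) map_mx val (row_mx a B) i j * b i == colc (p :: L) j]
   = (\sum_i val (a i ord0) * b i == p.1) &&
     [forall j, \sum_(i < r) map_mx val B i j * b i == colc L j].
  rewrite forall_recl; congr andb.
    by congr (_ == _); apply: eq_bigr => i _; rewrite !mapE row_mx0.
  apply: eq_forallb => j; rewrite /colc lift0 /=; congr (_ == _).
  by apply: eq_bigr => i _; rewrite !mapE row_mxS.
have E3 : [forall i, forall j, q (val (row_mx a B i j))] =
   [forall i, q (val (a i ord0))] && [forall i, forall j, q (val (B i j))].
  rewrite -forall_and; apply: eq_forallb => i; rewrite forall_recl row_mx0.
  by congr andb; apply: eq_forallb => j; rewrite row_mxS.
rewrite E1 E2 E3; case: [forall i, _ <= v i]; case: (_ == p.1); case: [forall i, q (val (a i ord0))]; rewrite /= ?andbF // andbT.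
Qed.

Lemma ifmul (c d : bool) : (if c && d then 1 else 0) = (if d then c * 1 else 0)%N.
Proof. by case: c; case: d. Qed.

Lemma cntq_cons q K r (b v : 'I_r -> nat) p L :
  cntq q K r (size L).+1 b v (colc (p::L)) (coln (p::L)) =
  (\sum_(a : 'cV['I_K]_r)
     ([forall i, val (a i ord0) * p.2 <= v i] && (\sum_i val (a i ord0) * b i == p.1)
        && [forall i, q (val (a i ord0))])
     * cntq q K r (size L) b (fun i => v i - val (a i ord0) * p.2) (colc L) (coln L))%N.
Proof.
rewrite /cntq card_sumE big_mkcond /=.
rewrite (reindex (fun x : 'cV['I_K]_r * 'M['I_K]_(r, size L) => row_mx x.1 x.2)) /=;
  last first.
  by exists (fun A : 'M['I_K]_(r, 1 + size L) => (lsubmx A, rsubmx A)) => [[x y]|A] _;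
    rewrite /= ?row_mxKl ?row_mxKr ?hsubmxK.
rewrite -(pair_bigA _ (fun (a : 'cV['I_K]_r) (B : 'M['I_K]_(r, size L)) => if is_arr b v (colc (p :: L)) (coln (p :: L)) (map_mx val (row_mx a B)) && [forall i, forall j0, q (val (row_mx a B i j0))] then 1 else 0)) /=.
apply: eq_bigr => a _; rewrite card_sumE big_distrr /= [RHS]big_mkcond /=.
apply: eq_bigr => B _.
rewrite cond_row_mx.
exact: ifmul.
Qed.

Local Open Scope fset_scope.
Local Open Scope mset_scope.

Lemma mem_fs (mu : mon) x : (x \in finsupp mu) = (mu x != 0%N).
Proof. by rewrite mem_finsupp. Qed.

Lemma validP (mu : mon) :
  reflect (forall x, mu x != 0%N -> (0 < x.1) && (0 < x.2))%N (valid mu).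
Proof.
by apply: (iffP allP) => H x; [rewrite -mem_fs; exact: H | rewrite mem_fs; exact: H].
Qed.

Lemma sum_supp (T : eqType) (s X : seq T) (F : T -> nat) : uniq s -> uniq X ->
  {subset s <= X} -> (forall x, x \in X -> x \notin s -> F x = 0%N) ->
  (\sum_(x <- s) F x = \sum_(x <- X) F x)%N.
Proof.
move=> us uX sX F0; rewrite [RHS](bigID (mem s)) /=.
rewrite [X in (_ + X)%N]big1_seq ?addn0; last by move=> x /andP[xs xX]; exact: F0.
rewrite -[\sum_(x <- X | x \in s) F x]big_filter.
have P : perm_eq s [seq x <- X | x \in s].
  apply: uniq_perm => //; first exact: filter_uniq.
  by move=> x; rewrite mem_filter; case xs: (x \in s) => //=; rewrite sX.
exact: perm_big P.
Qed.

Definition nthX (X : seq var) (k : 'I_(size X)) : var := nth (0,0)%N X k.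

Definition monX (X : seq var) (w : 'I_(size X) -> nat) : mon :=
  seq_mset (flatten [seq nseq (w k) (nthX k) | k <- enum 'I_(size X)]).

Arguments monX : clear implicits.

Lemma monXE (X : seq var) w x : monX X w x = (\sum_(k < size X) w k * (nthX k == x))%N.
Proof.
rewrite /monX mset_seqE count_flatten -map_comp sumn_map big_map; rewrite -enumT big_enum /=.
by apply: eq_bigr => k _; rewrite count_nseq mulnC.
Qed.

Lemma nthX_inj (X : seq var) (uX : uniq X) : injective (@nthX X).
Proof. by move=> i j /eqP; rewrite /nthX nth_uniq // => /eqP /val_inj. Qed.

Lemma mem_nthX (X : seq var) k : @nthX X k \in X.
Proof. exact: mem_nth. Qed.

Lemma nthXP (X : seq var) x : x \in X -> exists k : 'I_(size X), x = nthX k.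
Proof. by move=> xX; exists (Ordinal (etrans (index_mem x X) xX)); rewrite /nthX nth_index. Qed.

Lemma monX_nth (X : seq var) (uX : uniq X) w k : monX X w (@nthX X k) = w k.
Proof.
rewrite monXE (bigD1 k) //= eqxx muln1 big1 ?addn0 // => j jk.
by rewrite (inj_eq (nthX_inj uX)) (negbTE jk) muln0.
Qed.

Lemma monX_out (X : seq var) w x : x \notin X -> monX X w x = 0%N.
Proof.
move=> xX; rewrite monXE big1 // => k _.
case: eqP => [e|]; rewrite ?muln0 //.
by rewrite -e mem_nthX in xX.
Qed.

Lemma mdegE (mu : mon) X : uniq X -> (forall x, mu x != 0%N -> x \in X) ->
  mdeg mu = (\sum_(k < size X) mu (nthX k) * (nthX k).1)%N.
Proof.
move=> uX sX; rewrite /mdeg sum_mset (sum_supp (X := X)) ?fset_uniq //.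
- by rewrite (big_nth (0,0)%N) big_mkord.
- by move=> x; rewrite mem_fs; apply: sX.
- by move=> x _; rewrite mem_fs negbK => /eqP ->.
Qed.

Lemma mem_submsets (mu al : mon) : (al \in submsets mu) = (al `<=` mu).
Proof.
rewrite /submsets mem_undup; apply/mapP/idP.
  case=> t _ ->; apply/msubsetP => x; rewrite mset_seqE -count_mem_mset.
  by apply: leq_count_subseq; exact: mask_subseq.
move/msubsetP => H.
have : forall x, (count_mem x (enum_mset al) <= count_mem x (enum_mset mu))%N.
  by move=> x; rewrite !count_mem_mset.
case/count_subseqP => s' /subseqP [m sm ->] pe.
exists (@Tuple _ _ m (introT eqP sm)); first by rewrite mem_enum.
by rewrite -[LHS]seq_mset_id; apply/eq_seq_msetP.
Qed.

Section SumInt.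
Local Open Scope ring_scope.

Lemma big_sub_reindex (T : eqType) (I : finType) (s : seq T) (h : I -> T) (D : pred I)
    (f : T -> int) :
  uniq s -> {in D &, injective h} -> (forall i, D i -> h i \in s) ->
  (forall x, x \in s -> f x != 0 -> exists2 i, D i & x = h i) ->
  \sum_(x <- s) f x = \sum_(i | D i) f (h i).
Proof.
move=> us hinj hs hf.
set L := [seq h i | i <- enum D].
have uL : uniq L.
  by rewrite map_inj_in_uniq ?enum_uniq // => i j; rewrite !mem_enum; apply: hinj.
rewrite (bigID (mem L)) /= [X in _ + X]big1_seq ?addr0; last first.
  move=> x /andP[xL xs]; apply/eqP; apply: contraNT xL => /(hf _ xs) [i Di ->].
  by apply: map_f; rewrite mem_enum.
rewrite -[\sum_(x <- s | x \in L) f x]big_filter (perm_big L); last first.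
  apply: uniq_perm => //; first exact: filter_uniq.
  move=> x; rewrite mem_filter; apply/andP/idP => [[]//|xL]; split => //.
  by case/mapP: xL => i; rewrite mem_enum => Di ->; exact: hs.
by rewrite big_map big_enum.
Qed.

Lemma sumz (I : finType) (P : pred I) (F : I -> nat) :
  ((\sum_(i | P i) F i)%N)%:Z = \sum_(i | P i) (F i)%:Z.
Proof. by elim/big_rec2: _ => // i x y _ <-; rewrite PoszD. Qed.

Lemma sum_neq0 (T : eqType) (s : seq T) (F : T -> int) :
  \sum_(x <- s) F x != 0 -> exists2 x, x \in s & F x != 0.
Proof.
case: (boolP (has (fun x => F x != 0) s)) => [/hasP[x xs Fx]|/hasPn h] H; first by exists x.
have E : \sum_(x <- s) F x = 0 by apply: big1_seq => x /andP[_ /h /negPn /eqP].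
by rewrite E eqxx in H.
Qed.
End SumInt.

Local Open Scope fset_scope.
Local Open Scope mset_scope.

Definition Gq (q : pred nat) (c : nat) : ser :=
  fun mu => ((valid mu && all (fun x => q (mu x)) (finsupp mu) && (mdeg mu == c) : nat)%:Z)%R.
Definition Pq (q : pred nat) (s : seq (nat * nat)) : ser :=
  \big[sermul/ser1]_(p <- s) subst_pow p.2 (Gq q p.1).

Lemma Pq_cons q p s : Pq q (p :: s) = sermul (subst_pow p.2 (Gq q p.1)) (Pq q s).
Proof. by rewrite /Pq big_cons. Qed.

Lemma mdivnE n (mu : mon) x : mdivn n mu x = (mu x %/ n)%N.
Proof.
rewrite /mdivn fsfun_fun; case: ifP => //; rewrite mem_fs => /negbT; rewrite negbK.
by move/eqP ->; rewrite div0n.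
Qed.

Lemma msetBE (A B : mon) x : (A `\` B) x = (A x - B x)%N.
Proof. by rewrite msetE2. Qed.

Section SerInt.
Local Open Scope ring_scope.

Lemma Pq_valid q s mu : Pq q s mu != 0 -> valid mu.
Proof.
elim: s mu => [|p s IH] mu.
  rewrite /Pq big_nil /ser1 => H; have /eqP -> : mu == mset0 by move: H; case: (mu == mset0).
  by apply/validP => x; rewrite mset0E eqxx.
rewrite Pq_cons /sermul => /sum_neq0 [al]; rewrite mem_submsets => /msubsetP sub.
rewrite mulf_eq0 negb_or => /andP[]; rewrite /subst_pow.
case: ifP => [/allP Hd|]; last by rewrite eqxx.
rewrite /Gq; case: (valid _) /validP => [va _|]; last by [].
move/IH/validP => vr; apply/validP => x mx.
case: (boolP (al x == 0%N)) => [/eqP a0|anz].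
  by apply: vr; rewrite msetBE a0 subn0.
apply: va; rewrite mdivnE; have := Hd x; rewrite mem_fs => /(_ anz) dv.
by apply: contra anz => /eqP H; rewrite -(divnK dv) H.
Qed.

Lemma Fval (q : pred nat) (q0 : q 0%N) (X : seq var) (uX : uniq X)
  (vX : forall x, x \in X -> ((0 < x.1) && (0 < x.2))%N) K n c (n0 : (0 < n)%N)
  (a : 'cV['I_K]_(size X)) :
  subst_pow n (Gq q c) (monX X (fun k => val (a k ord0) * n)%N) =
  ((((\sum_k val (a k ord0) * (nthX k).1)%N == c) && [forall k, q (val (a k ord0))] : nat)%:Z).
Proof.
rewrite /subst_pow.
have -> : all (fun x => n %| monX X (fun k => val (a k ord0) * n)%N x)%N
              (finsupp (monX X (fun k => val (a k ord0) * n)%N)).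
  apply/allP => x _; case: (boolP (x \in X)) => [/nthXP [k ->]|xX].
    by rewrite monX_nth // dvdn_mull.
  by rewrite monX_out.
have -> : mdivn n (monX X (fun k => val (a k ord0) * n)%N) = monX X (fun k => val (a k ord0)).
  apply/msetP => x; rewrite mdivnE; case: (boolP (x \in X)) => [/nthXP [k ->]|xX].
    by rewrite !monX_nth // mulnK.
  by rewrite !monX_out // div0n.
have supp : forall x, monX X (fun k => val (a k ord0)) x != 0%N -> x \in X.
  by move=> x; apply: contraR => xX; rewrite monX_out.
rewrite /Gq; have -> : valid (monX X (fun k => val (a k ord0))).
  by apply/validP => x /supp; apply: vX.
rewrite (mdegE uX supp) andTb andbC.
have -> : all (fun x => q (monX X (fun k => val (a k ord0)) x))
             (finsupp (monX X (fun k => val (a k ord0)))) = [forall k, q (val (a k ord0))].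
  apply/allP/forallP => H.
    move=> k; case: (boolP (val (a k ord0) == 0%N)) => [/eqP -> // | nz].
    by have := H (nthX k); rewrite mem_fs !monX_nth //; apply.
  move=> x; rewrite mem_fs; case: (boolP (x \in X)) => [/nthXP [k ->]|xX].
    by rewrite monX_nth.
  by rewrite monX_out // eqxx.
by rewrite (eq_bigr (fun k => val (a k ord0) * (nthX k).1)%N) // => k _; rewrite monX_nth.
Qed.

End SerInt.

Lemma cntq_eqm q K r s b (m m' : 'I_r -> nat) c n : m =1 m' ->
  cntq q K r s b m c n = cntq q K r s b m' c n.
Proof.
move=> E; rewrite /cntq; apply: eq_card => A; rewrite !inE /is_arr.
by congr (_ && _ && _); apply: eq_forallb => i; rewrite E.
Qed.

Lemma cntq_nil q K r b (v : 'I_r -> nat) (c n : 'I_0 -> nat) :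
  cntq q K r 0 b v c n = [forall i, v i == 0%N].
Proof.
rewrite /cntq; case: (boolP [forall i, v i == 0%N]) => H.
  rewrite (_ : [set A | _] = setT) ?cardsT ?card_mx ?muln0 ?expn0 //.
  apply/setP => A; rewrite !inE /is_arr.
  apply/andP; split; [apply/andP; split|]; apply/forallP => i //.
  - by rewrite big_ord0 eq_sym (forallP H).
  - by case: i.
  - by apply/forallP => -[].
rewrite (_ : [set A | _] = set0) ?cards0 //.
apply/setP => A; rewrite !inE /is_arr; apply: contraNF H => /andP[/andP[/forallP H _] _].
by apply/forallP => i; have := H i; rewrite big_ord0 eq_sym.
Qed.

Section G.
Local Open Scope ring_scope.
Variables (q : pred nat) (q0 : q 0%N) (X : seq var) (uX : uniq X)
  (vX : forall x, x \in X -> ((0 < x.1) && (0 < x.2))%N) (K : nat).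

Definition bX (k : 'I_(size X)) : nat := (nthX k).1.

Lemma Gthm s : (forall p, p \in s -> 0 < p.2)%N ->
  forall mu : mon, (forall x, mu x != 0%N -> x \in X) -> (forall x, mu x < K)%N ->
  Pq q s mu = (cntq q K (size X) (size s) bX (fun k => mu (nthX k)) (colc s) (coln s))%:Z.
Proof.
elim: s => [_|p s IH sP] mu muX muK.
  rewrite /Pq big_nil /ser1 cntq_nil; congr (Posz (nat_of_bool _)).
  apply/eqP/forallP => [-> k|H]; first by rewrite mset0E.
  apply/msetP => x; rewrite mset0E; case: (boolP (x \in X)) => [/nthXP [k ->]|xX].
    exact/eqP/H.
  by apply/eqP; apply: contraNT xX => /muX.
have p0 : (0 < p.2)%N by apply: sP; rewrite mem_head.
rewrite Pq_cons /sermul.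
rewrite (big_sub_reindex (h := fun a : 'cV['I_K]_(size X) =>
                                   monX X (fun k => val (a k ord0) * p.2)%N)
                         (D := fun a => [forall k, val (a k ord0) * p.2 <= mu (nthX k)]%N));
  first last.
- move=> al; rewrite mem_submsets => /msubsetP sub.
  rewrite mulf_eq0 negb_or => /andP[]; rewrite /subst_pow.
  case: ifP => [/allP Hd _ _|]; last by rewrite eqxx.
  have dv : forall x, (p.2 %| al x)%N.
    move=> x; case: (boolP (al x == 0%N)) => [/eqP -> //|nz].
    by apply: Hd; rewrite mem_fs.
  have bK : forall k : 'I_(size X), (al (nthX k) %/ p.2 < K)%N.
    by move=> k; exact: (leq_ltn_trans (leq_trans (leq_div _ _) (sub _)) (muK _)).
  exists (\col_k (Ordinal (bK k))).
    by apply/forallP => k; rewrite mxE /= divnK.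
  apply/msetP => x; case: (boolP (x \in X)) => [/nthXP [k ->]|xX].
    by rewrite monX_nth // mxE /= divnK.
  rewrite monX_out //; apply/eqP; rewrite -leqn0.
  by apply: leq_trans (sub x) _; rewrite leqn0; apply: contraNT xX => /muX.
- move=> a Da; rewrite mem_submsets; apply/msubsetP => x.
  case: (boolP (x \in X)) => [/nthXP [k ->]|xX]; last by rewrite monX_out.
  by rewrite monX_nth //; exact: (forallP Da k).
- move=> a a' _ _ E; apply/matrixP => k j; rewrite (ord1 j); apply/val_inj.
  have := congr1 (fun m : mon => m (nthX k)) E; rewrite !monX_nth // => /eqP.
  by rewrite eqn_pmul2r // => /eqP.
- exact: undup_uniq.
rewrite cntq_cons sumz [LHS]big_mkcond /=; apply: eq_bigr => a _.
case: ifP => Da; last by rewrite /= mul0n.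
rewrite (Fval q0 uX vX) // IH; first last.
- by move=> x; rewrite msetBE; exact: (leq_ltn_trans (leq_subr _ _) (muK x)).
- by move=> x; rewrite msetBE => H; apply: muX; apply: contra H => /eqP ->.
- by move=> p' p's; apply: sP; rewrite in_cons p's orbT.
rewrite (@cntq_eqm _ _ _ _ _ _ (fun k => mu (nthX k) - val (a k ord0) * p.2)%N);
  last by move=> k; rewrite msetBE monX_nth.
by rewrite -PoszM /=.
Qed.
End G.

Local Open Scope fset_scope.
Local Open Scope mset_scope.

Lemma map_enum_nth (T U : Type) (s : seq T) x0 (f : T -> U) :
  [seq f (nth x0 s i) | i : 'I_(size s) <- enum 'I_(size s)] = map f s.
Proof.
transitivity [seq f (nth x0 s i) | i : nat <- map val (enum 'I_(size s))]; first by rewrite -map_comp.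
by rewrite val_enum_ord -[in RHS](mkseq_nth x0 s) /mkseq -map_comp.
Qed.

Lemma ord_fst (t : typ) : ordering_of (fst_at t) (snd_at t) t.
Proof.
rewrite /ordering_of /fst_at /snd_at.
rewrite (map_enum_nth (enum_mset t) (0,0)%N (fun p => (p.1, p.2))).
by rewrite (eq_map (g := id)) ?map_id ?seq_mset_id // => -[].
Qed.

Lemma tr_ord s (c n : 'I_s -> nat) (l : typ) : ordering_of c n l -> ordering_of n c (ttr l).
Proof.
move/eqP => <-; apply/eqP; rewrite /ttr; apply/eq_seq_msetP.
have := perm_map (fun p : nat * nat => (p.2, p.1))
  (perm_eq_seq_mset [seq (c i, n i) | i <- enum 'I_s]).
by rewrite perm_sym -map_comp.
Qed.

Lemma cntq_ord q K r r' s (b m : 'I_r -> nat) (b' m' : 'I_r' -> nat) c n t :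
  ordering_of b m t -> ordering_of b' m' t ->
  cntq q K r s b m c n = cntq q K r' s b' m' c n.
Proof.
move=> H1 H2.
have pe : perm_eq [seq (b i, m i) | i <- enum 'I_r] [seq (b' i, m' i) | i <- enum 'I_r'].
  by apply/eq_seq_msetP; rewrite (eqP H1) (eqP H2).
have er : r' = r.
  by move/perm_size: pe; rewrite !size_map -!enumT !size_enum_ord.
subst r'.
have pe' : perm_eq [seq (b i, m i) | i <- enum 'I_r] [tuple (b' i, m' i) | i < r].
  exact: pe.
case/tuple_permP: pe' => p E.
have Ei : forall i, (b i, m i) = (b' (p i), m' (p i)).
  by move: E => /= /eq_in_map H i; rewrite H ?mem_enum // tnth_mktuple.
by apply: (@cntq_rowperm q K r s p) => i; case: (Ei i).
Qed.

Lemma cntq_ord_col q K r s s' (b m : 'I_r -> nat) (c n : 'I_s -> nat) (c' n' : 'I_s' -> nat) l :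
  ordering_of c n l -> ordering_of c' n' l ->
  cntq q K r s b m c n = cntq q K r s' b m c' n'.
Proof.
move=> H1 H2; rewrite cntq_tr [RHS]cntq_tr.
exact: (cntq_ord _ _ _ _ (tr_ord H1) (tr_ord H2)).
Qed.

Lemma type_elem (t : typ) p : is_type t -> t p != 0%N -> ((0 < p.1) && (0 < p.2))%N.
Proof. by move=> /allP H; rewrite mset_neq0 => /H. Qed.

Lemma type_mul (t : typ) p : (t p * (p.1 * p.2) <= tdeg t)%N.
Proof.
rewrite /tdeg sum_mset; case: (boolP (p \in finsupp t)) => [pt|].
  by rewrite (big_rem _ pt) /= leq_addr.
by rewrite mem_fs negbK => /eqP ->.
Qed.

Lemma mem_types_deg d t : t \in types_of_deg d -> tdeg t = d.
Proof.
by rewrite mem_undup => /mapP [f]; rewrite mem_filter => /andP[/eqP H _] ->.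
Qed.

Lemma types_mem t : is_type t -> t \in types_of_deg (tdeg t).
Proof.
move=> tt; set d := tdeg t.
have bnd : forall y, t y != 0%N -> [/\ 0 < y.1, 0 < y.2, y.1 <= d, y.2 <= d & t y <= d]%N.
  move=> y ty; case/andP: (type_elem tt ty) => y1 y2; have := type_mul t y.
  rewrite -/d => H; split => //; apply: leq_trans H.
  - by apply: leq_trans (leq_pmulr _ y2) _; rewrite -{1}[(y.1 * y.2)%N]mul1n leq_mul2r lt0n ty orbT.
  - by apply: leq_trans (leq_pmull _ y1) _; rewrite -{1}[(y.1 * y.2)%N]mul1n leq_mul2r lt0n ty orbT.
  - by rewrite leq_pmulr // muln_gt0 y1 y2.
pose f : {ffun 'I_d * 'I_d -> 'I_d.+1} :=
  [ffun x : 'I_d * 'I_d => inord (t ((x.1 : nat).+1, (x.2 : nat).+1))].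
have ft : typ_of_ff f = t.
  apply/msetP => y; rewrite /typ_of_ff mset_seqE count_flatten -map_comp sumn_map big_map.
  rewrite -enumT big_enum /=.
  transitivity (\sum_(x : 'I_d * 'I_d) f x * (((x.1 : nat).+1, (x.2 : nat).+1) == y))%N.
    by apply: eq_bigr => x _; rewrite /= count_nseq mulnC.
  case: (boolP (t y != 0%N)) => [ty|]; last first.
    rewrite negbK => /eqP ty; rewrite ty big1 // => x _.
    case: eqP => [e|]; rewrite ?muln0 //.
    by rewrite ffunE /= e ty inordK.
  case: (bnd y ty) => y1 y2 y1d y2d tyd.
  have i1 : (y.1.-1 < d)%N by rewrite prednK.
  have i2 : (y.2.-1 < d)%N by rewrite prednK.
  rewrite (bigD1 (Ordinal i1, Ordinal i2)) //= big1 ?addn0.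
    rewrite !prednK // -surjective_pairing eqxx muln1 ffunE /= !prednK //.
    by rewrite -surjective_pairing inordK.
  move=> [x1 x2] /= hx; case: eqP => [e|]; rewrite ?muln0 //.
  case/negP: hx; apply/eqP; congr (_, _); apply/val_inj => /=; by rewrite -e.
rewrite -{1}ft mem_undup; apply/mapP; exists f => //.
by rewrite mem_filter mem_enum ft eqxx.
Qed.

Lemma mtype_type (mu : mon) : valid mu -> is_type (mtype mu).
Proof.
move/validP => vm; apply/allP => p; rewrite /mtype (perm_mem (perm_eq_seq_mset _)).
case/mapP => x xs -> /=; have nz : mu x != 0%N by rewrite -mem_fs.
by case/andP: (vm x nz) => -> _; rewrite lt0n nz.
Qed.

Lemma tdeg_mtype (mu : mon) : tdeg (mtype mu) = mdeg mu.
Proof.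
rewrite /tdeg /mtype (perm_big _ (perm_eq_seq_mset _)) big_map /mdeg sum_mset.
by apply: eq_bigr => x _; rewrite mulnC.
Qed.

Lemma ttr_type t : is_type t -> is_type (ttr t).
Proof.
move=> tt; apply/allP => p; rewrite /ttr (perm_mem (perm_eq_seq_mset _)).
by case/mapP => x xt -> /=; case/andP: (allP tt x xt) => -> ->.
Qed.

Lemma snd_pos t (tt : is_type t) j : (0 < snd_at t j)%N.
Proof. by have := allP tt _ (mem_nth (0,0)%N (ltn_ord j)); case/andP. Qed.

Lemma snd_le t j : (snd_at t j <= arr_bound t)%N.
Proof. by rewrite /arr_bound (big_rem _ (mem_nth (0,0)%N (ltn_ord j))) leq_addr. Qed.

Lemma num_arrE t l : num_arr t l =
  cntq predT (arr_bound t).+1 _ _ (fst_at t) (snd_at t) (fst_at l) (snd_at l).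
Proof.
rewrite /num_arr /cntq; apply: eq_card => A; rewrite !inE.
have -> : [forall i, forall j, predT (val (A i j))] by apply/forallP => i; apply/forallP.
by rewrite andbT.
Qed.

Lemma num_arr01E t l : num_arr01 t l =
  cntq (fun k => k <= 1)%N (arr_bound t).+1 _ _ (fst_at t) (snd_at t) (fst_at l) (snd_at l).
Proof.
rewrite /num_arr01 /cntq; apply: eq_card => A; rewrite !inE /is01.
by congr (_ && _); apply: eq_forallb => i; apply: eq_forallb => j; rewrite mapE.
Qed.

Section Main.
Local Open Scope ring_scope.

Lemma series_main (q : pred nat) (q0 : q 0%N) (l : typ) (tl : is_type l)
  (NA : typ -> nat)
  (HNA : forall t, NA t = cntq q (arr_bound t).+1 _ _ (fst_at t) (snd_at t) (fst_at l) (snd_at l))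
  (mu : mon) :
  Pq q (enum_mset l) mu = sum_types (tdeg l) NA mu.
Proof.
rewrite /sum_types.
case: (boolP (valid mu)) => vm; last first.
  rewrite big1 => [|t _]; last by rewrite /Mser (negbTE vm) mulr0.
  by apply/eqP; apply: contraNT vm; exact: Pq_valid.
pose X : seq var := finsupp mu.
have uX : uniq X := fset_uniq _.
have muX : forall x, mu x != 0%N -> x \in X by move=> x; rewrite -mem_fs.
have vX : forall x, x \in X -> ((0 < x.1) && (0 < x.2))%N.
  by move=> x; rewrite mem_fs; apply: (validP _ vm).
pose K := arr_bound (mtype mu).
have muK : forall x, (mu x < K.+1)%N.
  move=> x; rewrite ltnS /K /arr_bound /mtype (perm_big _ (perm_eq_seq_mset _)) big_map /=.
  case: (boolP (x \in X)) => [xX|xX]; first by rewrite (big_rem _ xX) leq_addr.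
  by rewrite (_ : mu x = 0%N) //; apply/eqP; apply: contraNT xX => /muX.
rewrite (Gthm q0 uX vX (K := K.+1)) //; last first.
  by move=> p pl; case/andP: (allP tl p pl).
have ordX : ordering_of (@bX X) (fun k => mu (nthX k)) (mtype mu).
  by rewrite /ordering_of /bX /nthX (map_enum_nth X (0,0)%N (fun x => (x.1, mu x))).
case: (boolP (mdeg mu == tdeg l)) => hd.
  have mem : mtype mu \in types_of_deg (tdeg l).
    by rewrite -(eqP hd) -tdeg_mtype; apply: types_mem; apply: mtype_type.
  rewrite (bigD1_seq _ mem (undup_uniq _)) /= big1 ?addr0; last first.
    by move=> t /negbTE; rewrite /Mser vm eq_sym => ->; rewrite mulr0.
  rewrite /Mser vm eqxx mulr1 HNA; congr Posz.
  exact: (cntq_ord _ _ _ _ ordX (ord_fst _)).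
rewrite big1_seq; last first.
  move=> t /andP[_ tm]; rewrite /Mser vm; case: eqP => [e|]; last by rewrite mulr0.
  by have := mem_types_deg tm; rewrite -e tdeg_mtype => /eqP; rewrite (negbTE hd).
rewrite /cntq; apply/eqP; rewrite eqz_nat cards_eq0; apply/eqP/setP => A; rewrite !inE.
apply/negbTE/negP => /andP[/arr_deg H _]; move: hd; rewrite (mdegE uX muX).
rewrite (eq_bigr _ (fun k _ => mulnC _ _)) [X in _ == X]/tdeg (big_nth (0,0)%N) big_mkord.
by rewrite /bX in H; rewrite H eqxx.
Qed.
End Main.

Lemma part3 (q : pred nat) t l (tt : is_type t) (tl : is_type l) :
  cntq q (arr_bound t).+1 _ _ (fst_at t) (snd_at t) (fst_at l) (snd_at l) =
  cntq q (arr_bound (ttr l)).+1 _ _ (fst_at (ttr l)) (snd_at (ttr l))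
       (fst_at (ttr t)) (snd_at (ttr t)).
Proof.
set Kb := (arr_bound t + arr_bound (ttr l))%N.
rewrite (@cntq_bound _ _ Kb) ?leq_addr //; last first.
  by move=> A HA i j; apply: (leq_trans _ (snd_le i)); exact: (arr_entry HA (snd_pos tl) i j).
rewrite [RHS](@cntq_bound _ _ Kb) ?leq_addl //; last first.
  move=> A HA i j; apply: (leq_trans _ (snd_le i)); exact: (arr_entry HA (snd_pos (ttr_type tt)) i j).
rewrite cntq_tr (cntq_ord _ _ _ _ (tr_ord (ord_fst l)) (ord_fst (ttr l))).
exact: (cntq_ord_col _ _ _ _ (tr_ord (ord_fst t)) (ord_fst (ttr t))).
Qed.

End Aux.
Import Aux.

Theorem theorem4 (l : typ) (Hl : is_type l) :
  (* H_lambda = sum_tau a(tau,lambda) M_tau, over types tau of degree d *)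
  (forall mu : mon, Hlam l mu = sum_types (tdeg l) (fun t => num_arr t l) mu) /\
  (* E^+_lambda = sum_tau e(tau,lambda) M_tau *)
  (forall mu : mon, Elam l mu = sum_types (tdeg l) (fun t => num_arr01 t l) mu) /\
  (* a(tau,lambda) = a(lambda^t,tau^t) and e(tau,lambda) = e(lambda^t,tau^t) *)
  (forall t : typ, is_type t -> tdeg t = tdeg l ->
     num_arr t l = num_arr (ttr l) (ttr t) /\
     num_arr01 t l = num_arr01 (ttr l) (ttr t)) /\
  (* realized by A |-> A^T, for any fixed orderings of tau and lambda (the  *)
  (* induced orderings of lambda^t = {(n_j,c_j)} and tau^t = {(m_i,b_i)})   *)
  (forall (t : typ), is_type t -> tdeg t = tdeg l ->
   forall (r s : nat) (b m : 'I_r -> nat) (c n : 'I_s -> nat),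
     ordering_of b m t -> ordering_of c n l ->
     ordering_of n c (ttr l) /\ ordering_of m b (ttr t) /\
     forall A : 'M[nat]_(r, s),
       is_arr b m c n A = is_arr n c m b A^T /\
       (is_arr b m c n A && is01 A) = (is_arr n c m b A^T && is01 A^T)).
Proof.
split.
  move=> mu; have -> : Hlam l = Pq predT (enum_mset l).
    rewrite /Hlam /Pq; apply: eq_bigr => p _; congr (subst_pow _ _).
    apply: functional_extensionality => nu; rewrite /Hser /Gq.
    by rewrite (_ : all _ _ = true) ?andbT //; elim: (enum_fset _).
  by apply: series_main => // t; rewrite num_arrE.
split.
  move=> mu; have -> : Elam l = Pq (fun k => k <= 1)%N (enum_mset l) by [].
  by apply: series_main => // t; rewrite num_arr01E.
split.
  move=> t tt _; rewrite !num_arrE !num_arr01E; split; exact: part3.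
move=> t tt _ r s b m c n H1 H2; split; first exact: tr_ord H2.
split; first exact: tr_ord H1.
move=> A; rewrite -is_arr_tr; split => //; congr andb.
rewrite /is01 forall_swap; apply: eq_forallb => j; apply: eq_forallb => i.
by rewrite mxE.
Qed.
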